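(* At every time during the execution of DASH (described in the context) on an initially connected graph, against any sequence of node deletions, the graph $G'$ formed by the surviving nodes and the healing edges added by DASH is a forest.
   Context: Model: a network is an undirected graph. Initially it is a connected graph $G_0$ on $n$ nodes. In each round an adversary deletes one surviving node $v$ together with its incident edges, and then DASH adds edges. $G$ denotes the current network; $E'$ is the set of healing edges added so far by DASH whose endpoints both survive; $G'=(V(G),E')$. $N(u,G)$, $N(u,G')$ denote neighbor sets in $G$, $G'$; $\delta(u)=\deg_G(u)-\deg_{G_0}(u)$. DASH: initially every node receives an ID drawn independently and uniformly from $[0,1]$ (its initial ID). When $v$ is deleted (quantities evaluated just before the deletion): partition the nodes of $N(v,G)$ whose current ID differs from that of $v$ into classes of equal current ID, and let $UN(v,G)$ consist of one node per class, the one with lowest initial ID. Let $S=UN(v,G)\cup N(v,G')$. Order $S$ by increasing $\delta$ and place the nodes in this order into a complete binary tree with $|S|$ positions, filled level by level from the top and left to right; add to the network and to $E'$ the edge between each node of $S$ and the node at its parent position. Then all nodes of the connected component of $G'$ containing $S$ set their ID to the minimum current ID among nodes of $S$. *)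

(* Defs.v *)
From HB Require Import structures.
From mathcomp Require Import all_boot all_order all_algebra.
From mathcomp Require Import reals.
Set Implicit Arguments. Unset Strict Implicit. Unset Printing Implicit Defensive.
Import Order.TTheory GRing.Theory Num.Theory.
Local Open Scope ring_scope.

Section DASH.
Variables (T : finType) (R : realType).
(* initial network G0 (symmetric irreflexive relation on the node set T) *)
Variable G0 : rel T.
Variable id0 : T -> R.

Record state := State {
  alive : {set T};
  healed : {set T * T};     (* all healing edges ever added (both orientations) *)
  cid : T -> R
}.

Definition adjG (s : state) : rel T := fun x y =>
  [&& x \in alive s, y \in alive s & (G0 x y || ((x, y) \in healed s))].

Definition adjGp (s : state) : rel T := fun x y =>
  [&& x \in alive s, y \in alive s & (x, y) \in healed s].

Definition nbrG (s : state) (u : T) : {set T} := [set w | adjG s u w].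
Definition nbrGp (s : state) (u : T) : {set T} := [set w | adjGp s u w].

Definition delta (s : state) (u : T) : int :=
  (#|nbrG s u|%:Z - #|[set w | G0 u w]|%:Z)%R.

(* UN(v,G): one node per class of equal current ID (different from v's),
   namely the one of lowest initial ID in that class *)
Definition UN (s : state) (v : T) : {set T} :=
  [set u in nbrG s v | (cid s u != cid s v) &&
     [forall w in nbrG s v, (cid s w == cid s u) ==> (id0 u <= id0 w)]].

Definition Sset (s : state) (v : T) : {set T} := UN s v :|: nbrGp s v.

(* healing edges of the complete binary tree (heap layout) on the sequence q:
   position i >= 1 has parent position (i-1)/2 *)
Definition tree_edges (q : seq T) : {set T * T} :=
  [set e | [exists i : 'I_(size q),
     (0 < (i : nat))%N &&
     let a := nth e.1 q i in let b := nth e.1 q ((i : nat).-1./2) in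
     (e == (a, b)) || (e == (b, a))]].

(* one round: the adversary deletes v, DASH heals; q is the order of S by
   increasing delta (ties broken arbitrarily), c' the updated IDs *)
Definition dash_step (s s' : state) : Prop :=
  exists v : T, exists q : seq T,
    [/\ v \in alive s,
        uniq q, [set x in q] = Sset s v &
        sorted (fun a b => delta s a <= delta s b) q] /\
    [/\ alive s' = alive s :\ v,
        healed s' = healed s :|: tree_edges q &
        (* ID update: the component of the new G' containing S gets the
           minimum current ID among nodes of S; others keep their ID *)
        forall x : T,
          if [exists u in Sset s v, connect (adjGp s') u x]
          then exists2 m, m \in Sset s v &
                 (cid s' x = cid s m /\
                  forall u, u \in Sset s v -> cid s m <= cid s u)
          else cid s' x = cid s x].

Definition init_state : state := State [set: T] set0 id0.

Inductive reachable : state -> Prop :=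
  | reach_init : reachable init_state
  | reach_step s s' : reachable s -> dash_step s s' -> reachable s'.

End DASH.

Definition forest (T : finType) (e : rel T) : Prop :=
  forall p : seq T, uniq p -> (2 < size p)%N -> ~~ cycle e p.

(* Main.v *)
Require Import Defs.
From mathcomp Require Import all_boot all_order all_algebra.
From mathcomp Require Import reals.
Set Implicit Arguments. Unset Strict Implicit. Unset Printing Implicit Defensive.
Import Order.TTheory GRing.Theory Num.Theory.

Section Tree.
Variable T : finType.
Implicit Types (q : seq T) (x y : T).

Lemma par_lt i : (0 < i)%N -> (i.-1./2 < i)%N.
Proof. move=> ip; rewrite -(prednK ip) ltnS leq_half_double -addnn; apply: leq_trans (leqnSn _); exact: leq_addr. Qed.

Lemma tree_spec q x y : (x, y) \in tree_edges q ->
  exists i, [/\ (0 < i)%N, (i < size q)%N &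
    (x = nth x q i /\ y = nth x q i.-1./2) \/ (y = nth x q i /\ x = nth x q i.-1./2)].
Proof.
rewrite inE => /existsP [[i ilt]] /= /andP [i0 /orP [] /eqP [-> ->]];
  exists i; split => //; [left|right]; split => //; apply: set_nth_default;
  by rewrite ?ilt // (ltn_trans (par_lt i0) ilt).
Qed.

Lemma tree_mem q x y : (x, y) \in tree_edges q -> x \in q /\ y \in q.
Proof.
move=> /tree_spec [i [i0 ilt [[-> ->]|[-> ->]]]];
  by split; apply: mem_nth; rewrite ?ilt // (ltn_trans (par_lt i0) ilt).
Qed.

Lemma tree_sym q x y : (x, y) \in tree_edges q -> (y, x) \in tree_edges q.
Proof.
move=> /tree_spec [i [i0 ilt H]]; rewrite inE; apply/existsP; exists (Ordinal ilt).
rewrite /= i0 /=; have plt := ltn_trans (par_lt i0) ilt.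
rewrite (set_nth_default x y ilt) (set_nth_default x y plt).
by case: H => [[<- <-]|[<- <-]]; rewrite eqxx ?orbT.
Qed.

Lemma tree_noloop q x : uniq q -> (x, x) \notin tree_edges q.
Proof.
move=> uq; apply/negP => /tree_spec [i [i0 ilt H]].
have plt := ltn_trans (par_lt i0) ilt.
have E : nth x q i = nth x q i.-1./2 by case: H => [[<- <-]|[<- <-]].
move/eqP: E; rewrite nth_uniq // => /eqP E.
by move: (par_lt i0); rewrite -E ltnn.
Qed.

Lemma tree_index q x y : uniq q -> (x, y) \in tree_edges q ->
  ((0 < index x q)%N /\ index y q = (index x q).-1./2) \/
  ((0 < index y q)%N /\ index x q = (index y q).-1./2).
Proof.
move=> uq /tree_spec [i [i0 ilt H]]; have plt := ltn_trans (par_lt i0) ilt.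
case: H => [[-> ->]|[-> ->]]; rewrite !index_uniq //; by [left|right].
Qed.

Lemma exists_max (f : T -> nat) (p : seq T) : p != [::] ->
  exists2 x, x \in p & forall z, z \in p -> (f z <= f x)%N.
Proof.
elim: p => // a [|b p] IH _.
  by exists a; rewrite ?inE // => z; rewrite inE => /eqP ->.
have [x xp xm] := IH isT.
case: (leqP (f a) (f x)) => h.
  exists x; first by rewrite inE xp orbT.
  by move=> z; rewrite inE => /orP [/eqP ->|/xm].
exists a; first by rewrite inE eqxx.
move=> z; rewrite inE => /orP [/eqP ->//|/xm zx]; exact: (leq_trans zx (ltnW h)).
Qed.

Lemma next_next_neq (p : seq T) x : uniq p -> (2 < size p)%N -> x \in p ->
  next p (next p x) != x.
Proof.
move=> up sp /rot_to [i l E].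
rewrite -!(next_rot i up) E.
have : uniq (x :: l) by rewrite -E rot_uniq.
have : (2 < size (x :: l))%N by rewrite -E size_rot.
case: l E => [|a [|b l]] //= E _.
rewrite !inE !negb_or => /andP [/and3P [xa xb _] /andP [/andP [ab _] _]].
idtac.
by rewrite eqxx [a == x]eq_sym (negbTE xa) eqxx eq_sym.
Qed.

Lemma tree_acyclic q p : uniq q -> uniq p -> (2 < size p)%N ->
  ~~ cycle (fun x y => (x, y) \in tree_edges q) p.
Proof.
move=> uq up sp; apply/negP => cp.
have pn : p != [::] by case: p sp {up cp}.
have [x xp xm] := exists_max (fun z => index z q) pn.
have Hn := next_cycle cp xp; have Hp := prev_cycle cp xp.
have Hp' := tree_sym Hp.
have key : forall y, y \in p -> (x, y) \in tree_edges q -> index y q = (index x q).-1./2.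
  move=> y yp /(tree_index uq) [[//]|[y0 E]].
  have := xm y yp; rewrite E => h.
  by have := leq_ltn_trans h (par_lt y0); rewrite ltnn.
have E1 := key _ (etrans (mem_next p x) xp) Hn; have E2 := key _ (etrans (mem_prev p x) xp) Hp'.
have [_ nq] := tree_mem Hn; have [_ pq] := tree_mem Hp'.
have E : next p x = prev p x.
  by rewrite -(nth_index x nq) -(nth_index x pq) E1 E2.
have := next_next_neq up sp xp; rewrite E next_prev // eqxx //.
Qed.


End Tree.
Section Main.
Variables (T : finType) (R : realType) (G0 : rel T) (id0 : T -> R).
Hypothesis G0irr : irreflexive G0.
Hypothesis id0inj : injective id0.

Definition inv (s : state T R) :=
 [/\ forall x y, (x, y) \in healed s -> (y, x) \in healed s,
     forall x, (x, x) \notin healed s,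
     forall x y, connect (adjGp s) x y -> cid s x = cid s y &
     forall p, uniq p -> (2 < size p)%N -> ~~ cycle (adjGp s) p ].

Lemma adjGp_sym (s : state T R) :
  (forall x y, (x, y) \in healed s -> (y, x) \in healed s) -> symmetric (adjGp s).
Proof.
move=> hs x y; apply/idP/idP => /and3P [a b c]; rewrite /adjGp ?a ?b /=; exact: hs.
Qed.

Section Step.
Variables (s s' : state T R) (v : T) (q : seq T).
Hypothesis Is : inv s.
Hypotheses (va : v \in alive s) (uq : uniq q)
  (qS : [set x in q] = Sset G0 id0 s v).
Hypotheses (As : alive s' = alive s :\ v)
  (Hs : healed s' = healed s :|: tree_edges q).
Hypothesis Cs : forall x : T,
  if [exists u in Sset G0 id0 s v, connect (adjGp s') u x]
  then exists2 m, m \in Sset G0 id0 s v &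
     (cid s' x = cid s m /\
      forall u, u \in Sset G0 id0 s v -> (cid s m <= cid s u)%R)
  else cid s' x = cid s x.

Local Notation S := (Sset G0 id0 s v).
Let H := fun x y => [&& x \in alive s', y \in alive s' & (x, y) \in healed s].
Let Tr := fun x y => (x, y) \in tree_edges q.

Lemma inS_q u : (u \in q) = (u \in S).
Proof. by rewrite -qS inE. Qed.

Lemma S_cases u : u \in S ->
  (u \in nbrG G0 s v) && ((cid s u != cid s v) &&
     [forall w in nbrG G0 s v, (cid s w == cid s u) ==> (id0 u <= id0 w)%R])
  \/ adjGp s v u.
Proof.
by rewrite /Sset in_setU /UN /nbrGp !inE => /orP [h|h]; [left|right].
Qed.

Lemma nbr_alive u : u \in nbrG G0 s v -> u \in alive s'.
Proof.
case: Is => _ I2 _ _.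
rewrite inE /adjG As in_setD1 => /and3P [_ ua h]; rewrite ua andbT.
apply/eqP => E; move: h; rewrite E G0irr /=; exact/negP/I2.
Qed.

Lemma S_alive u : u \in S -> u \in alive s'.
Proof.
case/S_cases => [/andP [h _]|h]; apply: nbr_alive => //.
by move: h; rewrite inE /adjG /adjGp => /and3P [-> -> ->]; rewrite orbT.
Qed.

Lemma edge_split x y : adjGp s' x y -> H x y || Tr x y.
Proof.
rewrite /adjGp Hs in_setU => /and3P [xa ya /orP [h|h]];
  by rewrite /H /Tr xa ya h ?orbT.
Qed.

Lemma H_adj x y : H x y -> adjGp s x y.
Proof.
move=> /and3P [xa ya h]; rewrite /adjGp h andbT.
by move: xa ya; rewrite As !in_setD1 => /andP[_ ->] /andP[_ ->].
Qed.

Lemma connectH x y : connect H x y -> connect (adjGp s) x y.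
Proof.
apply: connect_sub => a b /H_adj; exact: connect1.
Qed.

Lemma path_alive a r : path H a r -> {subset r <= alive s'}.
Proof.
elim: r a => // b r IH a /= /andP [/and3P [_ ba _] pr] z.
rewrite inE => /orP [/eqP ->//|]; exact: IH pr z.
Qed.

Lemma K u w : u \in S -> w \in S -> connect H u w -> u = w.
Proof.
case: Is => I1 I2 I3 I4.
move=> uS wS cuw; have cid_uw := I3 _ _ (connectH cuw).
case: (S_cases uS) => [/andP [un /andP [uc uf]]|uv];
  case: (S_cases wS) => [/andP [wn /andP [wc wf]]|wv].
- apply: id0inj; apply/eqP; rewrite eq_le.
  move/forall_inP: uf => /(_ w wn); rewrite cid_uw eqxx /= => ->.
  by move/forall_inP: wf => /(_ u un); rewrite cid_uw eqxx /= => ->.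
- have := I3 _ _ (connect1 wv); rewrite -cid_uw => E.
  by move: uc; rewrite E eqxx.
- have := I3 _ _ (connect1 uv); rewrite cid_uw => E.
  by move: wc; rewrite E eqxx.
- apply/eqP/negPn/negP => uw.
  case/connectP: cuw => r pr wE.
  move: wE; case: (shortenP pr) => r' pr' ur' _ wE'.
  have pa := path_alive pr'.
  have vnot : v \notin u :: r'.
    rewrite inE negb_or; apply/andP; split.
      by apply/eqP => E; move: (S_alive uS); rewrite -E As in_setD1 eqxx.
    by apply/negP => /pa; rewrite As in_setD1 eqxx.
  have rn : r' != [::] by case: r' {pr' ur' pa vnot} wE' => //= E; move: uw; rewrite E eqxx.
  have := I4 (v :: u :: r'); rewrite /= rcons_path.
  move: ur' => /= /andP [ur1 ur2]; rewrite vnot ur1 ur2.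
  have sz : (2 < (size r').+2)%N by rewrite !ltnS lt0n size_eq0.
  move=> /(_ isT sz) /negP; apply.
  rewrite uv (sub_path H_adj pr') /= -wE' (adjGp_sym I1) wv.
  by [].
Qed.


Lemma Tr_S x y : Tr x y -> x \in S /\ y \in S.
Proof. by move=> /tree_mem [a b]; rewrite -!inS_q. Qed.

Lemma W r a : path (adjGp s') a r -> r != [::] -> ~~ Tr a (head a r) ->
  (exists2 b, b \in r & (b \in S) && connect H a b) \/ path H a r.
Proof.
elim: r a => // c r IH a /= /andP [ac pr] _ nt.
have Hac : H a c by move: (edge_split ac); rewrite (negbTE nt) orbF.
case cS: (c \in S).
  by left; exists c; [rewrite inE eqxx | rewrite cS (connect1 Hac)].
case: r IH pr => [|d r] IH pr; first by right; rewrite /= Hac.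
have nt' : ~~ Tr c (head c (d :: r)).
  by apply/negP => /Tr_S [h _]; rewrite h in cS.
case: (IH c pr isT nt') => [[b br /andP [bS cb]]|ph].
  left; exists b; first by rewrite inE br orbT.
  by rewrite bS (connect_trans (connect1 Hac) cb).
by right; rewrite /= Hac.
Qed.

Lemma claim p y : uniq p -> cycle (adjGp s') p -> y \in p ->
  Tr y (next p y) -> Tr (next p y) (next p (next p y)).
Proof.
move=> up cp /rot_to [i l E].
rewrite -!(next_rot i up) E.
have ul : uniq (y :: l) by rewrite -E rot_uniq.
have cl : cycle (adjGp s') (y :: l) by rewrite -E rot_cycle.
case: l E ul cl => [|x l'] E ul cl.
  by rewrite /= eqxx => h; move: (@tree_noloop _ q y uq); rewrite /Tr in h; rewrite h.
move: ul => /= /andP []; rewrite inE negb_or => /andP [yx yl'] /andP [xl' ul'].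
have N1 : True by [].
have N2 : next_at x y x l' = head y l'.
  by case: (l') => [|z l''] /=; rewrite eqxx.
rewrite eqxx [x == y]eq_sym (negbTE yx) N2 => Tyx.
move: cl => /= /andP [_ pth].
apply/negPn/negP => nt.
have hd : head x (rcons l' y) = head y l' by case: (l').
have [yS xS] := Tr_S Tyx.
case: (W pth _ _).
- by case: (l').
- by rewrite hd.
- move=> [b br /andP [bS xb]]; have E' := K xS bS xb.
  by move: br; rewrite -E' mem_rcons inE eq_sym (negbTE yx) (negbTE xl').
- move=> ph; have := K xS yS.
  have cxy : connect H x y.
    by apply/connectP; exists (rcons l' y); rewrite ?last_rcons.
  by move=> /(_ cxy) E'; move: yx; rewrite E' eqxx.
Qed.

Lemma all_tr p : uniq p -> cycle (adjGp s') p ->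
  (exists2 y, y \in p & Tr y (next p y)) -> cycle Tr p.
Proof.
move=> up cp [y yp ty]; apply: cycle_from_next => // z zp.
have : fconnect (next p) y z by rewrite (fconnect_cycle (cycle_next up) yp).
case/connectP => r pr ->.
elim: r y yp ty pr {zp} => // c r IH y yp ty /= /andP [/eqP nc pr].
apply: IH pr; first by rewrite -nc mem_next.
by rewrite -nc; apply: claim.
Qed.

Lemma forest' p : uniq p -> (2 < size p)%N -> ~~ cycle (adjGp s') p.
Proof.
case: Is => _ _ _ I4.
move=> up sp; apply/negP => cp.
case: (boolP (has (fun y => Tr y (next p y)) p)) => [/hasP [y yp ty]|/hasPn nt].
  have := tree_acyclic uq up sp; rewrite -/Tr.
  by rewrite (all_tr up cp (ex_intro2 _ _ y yp ty)).
have := I4 p up sp; apply/negP/negPn.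
apply: cycle_from_next => // y yp.
apply: H_adj; move: (edge_split (next_cycle cp yp)).
by rewrite (negbTE (nt y yp)) orbF.
Qed.

Lemma hsym' x y : (x, y) \in healed s' -> (y, x) \in healed s'.
Proof.
case: Is => I1 _ _ _.
rewrite Hs !in_setU => /orP [/I1 ->//|/tree_sym ->]; by rewrite orbT.
Qed.

Lemma noloop' x : (x, x) \notin healed s'.
Proof.
case: Is => _ I2 _ _.
by rewrite Hs in_setU negb_or I2 tree_noloop.
Qed.

Lemma notS_path r a : path (adjGp s') a r ->
  ~~ [exists u in S, connect (adjGp s') u a] ->
  path (adjGp s) a r /\ ~~ [exists u in S, connect (adjGp s') u (last a r)].
Proof.
have sym := adjGp_sym hsym'.
elim: r a => [|b r IH] a /=; first by [].
move=> /andP [ab pr] na.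
have Hab : H a b.
  move: (edge_split ab) => /orP [//|/Tr_S [aS _]].
  by move: na => /negP; case; apply/exists_inP; exists a.
have nb : ~~ [exists u in S, connect (adjGp s') u b].
  apply/negP => /exists_inP [u uS ub]; move: na => /negP; apply.
  apply/exists_inP; exists u => //; apply: connect_trans ub _.
  by apply: connect1; rewrite sym.
by have [-> ->] := IH b pr nb; rewrite H_adj.
Qed.

Lemma cid' x y : connect (adjGp s') x y -> cid s' x = cid s' y.
Proof.
case: Is => _ _ I3 _.
have sym := adjGp_sym hsym'.
move=> cxy.
case: (boolP [exists u in S, connect (adjGp s') u x]) => ex.
  have ey : [exists u in S, connect (adjGp s') u y].
    case/exists_inP: ex => u uS ux; apply/exists_inP; exists u => //.
    exact: connect_trans ux cxy.
  have := Cs x; rewrite ex => -[m1 m1S [-> m1m]].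
  have := Cs y; rewrite ey => -[m2 m2S [-> m2m]].
  by apply/eqP; rewrite eq_le m1m // m2m.
have := Cs x; rewrite (negbTE ex) => ->.
case/connectP: cxy => r pr yE.
have [pr' ny] := notS_path pr ex.
have := Cs y; rewrite yE (negbTE ny) => ->.
apply: I3; apply/connectP; by exists r.
Qed.

Lemma inv' : inv s'.
Proof. split; [exact: hsym' | exact: noloop' | exact: cid' | exact: forest']. Qed.

End Step.

Lemma inv_init : inv (init_state id0).
Proof.
split => //.
- by move=> x y; rewrite inE.
- by move=> x; rewrite inE.
- move=> x y /connectP [[|a r] /=]; first by move=> _ ->.
  by rewrite /adjGp /= in_set0 !andbF.
- move=> [|a [|b p]] //= _ _; by rewrite /adjGp /= in_set0 !andbF.
Qed.

Lemma inv_reach s : reachable G0 id0 s -> inv s.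
Proof.
elim => [|s1 s2 _ IH [v [q [[va uq qS _] [As Hs Cs]]]]]; first exact: inv_init.
exact: (inv' IH uq qS As Hs Cs).
Qed.
End Main.

Local Open Scope ring_scope.
Theorem lemma1 (T : finType) (R : realType) (G0 : rel T) (id0 : T -> R) :
  symmetric G0 -> irreflexive G0 ->
  (forall x y : T, connect G0 x y) ->
  injective id0 -> (forall x : T, 0 <= id0 x <= 1) ->
  forall s : state T R, reachable G0 id0 s -> forest (adjGp s).
Proof.
move=> _ irr _ inj _ s rs; have [_ _ _ I4] := inv_reach irr inj rs.
move=> p up sp; exact: I4.
Qed.
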